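(* Let $\phi:B_E\to B_E$ be analytic. For each $z\in B_E$ with $\phi(z)\neq 0$ there is $\eta(z) \in E$ with $\|\eta(z)\|=1$ and $\langle \phi(z),\eta(z)\rangle=0$ such that, for $\xi =\phi(z) + \sqrt{1 - \|\phi(z)\|^2}\,\eta(z)$, $$|\langle\mathcal R\phi(z),\xi\rangle|\ge\sqrt{1 - \|\phi(z)\|^2}\, \|\mathcal R\phi(z)\| -\Big(1 + \frac{\sqrt{1 - \|\phi(z)\|^2}}{\|\phi(z)\|}\Big) |\langle \mathcal R\phi(z),\phi(z)\rangle|.$$
   Context: $E$ is a complex Hilbert space of arbitrary dimension with inner product $\langle\cdot,\cdot\rangle$ and open unit ball $B_E$; $\mathcal R\phi(z)=\phi'(z)(z)$ is the radial derivative of $\phi$. *)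

(* Defs.v *)
(* The complex field is  R[i]  (mathcomp-real-closed
   [complex]) for an arbitrary  R : realType; a complex Hilbert space is a
   complete normed R[i]-module whose norm is induced by an inner product. *)
From HB Require Import structures.
From mathcomp Require Import all_boot all_order all_algebra.
From mathcomp Require Import all_classical all_reals all_analysis.
From mathcomp Require Export complex.
Import Order.TTheory GRing.Theory Num.Theory.
Import numFieldNormedType.Exports.
Local Open Scope ring_scope.
Local Open Scope complex_scope.

Set Implicit Arguments.
Unset Strict Implicit.
Unset Printing Implicit Defensive.

Section Hilbert.
Variable R : realType.
Variable E : completeNormedModType R[i].

Definition is_inner_product (ip : E -> E -> R[i]) : Prop :=
  [/\ (forall (a : R[i]) (x y w : E), ip (a *: x + y) w = a * ip x w + ip y w),
      (forall x y : E, ip y x = (ip x y)^*) &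
      (forall x : E, ip x x = `|x| ^+ 2)].

Definition unit_ball : set E := [set z | `|z| < 1].

(** phi is analytic (= Frechet C-differentiable, i.e. holomorphic) on B_E *)
Definition analytic_on_ball (phi : E -> E) : Prop :=
  forall z, unit_ball z -> differentiable phi z.

Definition maps_ball (phi : E -> E) : Prop :=
  forall z, unit_ball z -> unit_ball (phi z).

Definition radial_derivative (phi : E -> E) (z : E) : E := 'd phi z z.

End Hilbert.

(* Main.v *)
Require Import Defs.
From HB Require Import structures.
From mathcomp Require Import all_boot all_order all_algebra.
From mathcomp Require Import all_classical all_reals all_analysis.
From mathcomp Require Import complex.
Import Order.TTheory GRing.Theory Num.Theory.
Import numFieldNormedType.Exports.
Local Open Scope ring_scope.
Local Open Scope complex_scope.
Set Implicit Arguments.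

Lemma ipDl (R : realType) (E : completeNormedModType R[i])
  (ip : E -> E -> R[i]) (Hip : is_inner_product ip) x y w :
  ip (x + y) w = ip x w + ip y w.
Proof. case: Hip => H1 _ _; have := H1 1 x y w; by rewrite scale1r mul1r. Qed.

Lemma ip0l (R : realType) (E : completeNormedModType R[i])
  (ip : E -> E -> R[i]) (Hip : is_inner_product ip) w : ip 0 w = 0.
Proof.
have := ipDl Hip 0 0 w; rewrite addr0 => H.
by apply/(addrI (ip 0 w)); rewrite addr0 -H.
Qed.

Lemma ipZl (R : realType) (E : completeNormedModType R[i])
  (ip : E -> E -> R[i]) (Hip : is_inner_product ip) a x w :
  ip (a *: x) w = a * ip x w.
Proof. have Hs := Hip; case: Hs => H1 _ _; have := H1 a x 0 w; by rewrite addr0 ip0l // addr0. Qed.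

Lemma ipZr (R : realType) (E : completeNormedModType R[i])
  (ip : E -> E -> R[i]) (Hip : is_inner_product ip) a x w :
  ip w (a *: x) = a^* * ip w x.
Proof.
have Hs := Hip; case: Hs => _ H2 _.
by rewrite H2 ipZl // rmorphM /= -H2.
Qed.

Lemma ipDr (R : realType) (E : completeNormedModType R[i])
  (ip : E -> E -> R[i]) (Hip : is_inner_product ip) x y w :
  ip w (x + y) = ip w x + ip w y.
Proof.
have Hs := Hip; case: Hs => _ H2 _.
by rewrite H2 ipDl // rmorphD /= -!H2.
Qed.
From mathcomp Require Import ring.

Definition perp (R : realType) (E : completeNormedModType R[i])
  (ip : E -> E -> R[i]) (p x : E) : E := (- (ip x p / `|p| ^+ 2)) *: p + x.
Arguments perp {R E}.

Lemma perp_orth (R : realType) (E : completeNormedModType R[i])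
  (ip : E -> E -> R[i]) (Hip : is_inner_product ip) p x :
  p != 0 -> ip (perp ip p x) p = 0.
Proof.
move=> p0; have Hs := Hip; case: Hs => _ _ H3.
rewrite /perp ipDl // ipZl // H3 mulNr divfK ?addNr //.
by rewrite expf_neq0 // normr_eq0.
Qed.

Lemma unit_orth (R : realType) (E : completeNormedModType R[i])
  (ip : E -> E -> R[i]) (Hip : is_inner_product ip) p y :
  y != 0 -> ip y p = 0 ->
  exists eta, [/\ `|eta| = 1, ip p eta = 0 & `|ip y eta| = `|y|].
Proof.
move=> y0 hyp; have Hs := Hip; case: Hs => _ H2 H3.
have ny0 : `|y| != 0 by rewrite normr_eq0.
exists (`|y|^-1 *: y); split.
- by rewrite normrZ normfV normr_id mulVf.
- by rewrite ipZr // H2 hyp rmorph0 mulr0.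
- rewrite ipZr // H3 normrM norm_conjC normfV normr_id normrX normr_id.
  by rewrite expr2 mulrA mulVf // mul1r.
Qed.

Lemma exists_orth (R : realType) (E : completeNormedModType R[i])
  (ip : E -> E -> R[i]) (Hip : is_inner_product ip)
  (Hdim : exists u v : E, [/\ u != 0, v != 0 & ip u v = 0]) p :
  p != 0 -> exists eta, `|eta| = 1 /\ ip p eta = 0.
Proof.
move=> p0; have Hs := Hip; case: Hs => _ H2 H3.
suff [x hx] : exists x, perp ip p x != 0.
  have [eta [h1 h2 _]] := unit_orth Hip p _ hx (perp_orth Hip p x p0).
  by exists eta.
case: Hdim => u [v [u0 v0 uv]].
case: (eqVneq (perp ip p u) 0) => hu; last by exists u.
exists v.
set cu := ip u p / `|p| ^+ 2.
have eu : u = cu *: p.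
  by move: hu; rewrite /perp addrC => /eqP; rewrite addr_eq0 => /eqP ->; rewrite scaleNr opprK.
have cu0 : cu != 0 by apply: contraNneq u0 => c0; rewrite eu c0 scale0r.
have hpv : ip p v = 0.
  by move: uv; rewrite eu ipZl // => /eqP; rewrite mulf_eq0 (negbTE cu0) /= => /eqP.
have hvp : ip v p = 0 by rewrite H2 hpv rmorph0.
by rewrite /perp hvp mul0r oppr0 scale0r add0r.
Qed.

Theorem lemma4p3 (R : realType) (E : completeNormedModType R[i])
  (ip : E -> E -> R[i]) (Hip : is_inner_product ip)
  (Hdim : exists u v : E, [/\ u != 0, v != 0 & ip u v = 0])
  (phi : E -> E) (Hanal : analytic_on_ball phi) (Hmaps : maps_ball phi)
  (z : E) (Hz : unit_ball z) (Hphiz : phi z != 0) :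
  exists eta : E,
    [/\ `|eta| = 1, ip (phi z) eta = 0 &
      let s := sqrtC (1 - `|phi z| ^+ 2) in
      let xi := phi z + s *: eta in
      s * `|radial_derivative phi z|
        - (1 + s / `|phi z|) * `|ip (radial_derivative phi z) (phi z)|
      <= `|ip (radial_derivative phi z) xi| ].
Proof.
have Hs := Hip; case: Hs => _ H2 H3.
have hr1 : `|phi z| < 1 := Hmaps z Hz.
move: Hphiz hr1; set p := phi z; set w := radial_derivative phi z => p0 hr1.
have r0 : `|p| != 0 by rewrite normr_eq0.
have rgt0 : 0 < `|p| by rewrite normr_gt0.
set r := `|p| in r0 rgt0 hr1 *.
set c := ip w p / r ^+ 2.
set y := perp ip p w.
have wE : w = c *: p + y.
  by rewrite /y /perp addrA -scalerDl addrN scale0r add0r.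
have hA : `|w| <= `|ip w p| / r + `|y|.
  rewrite {1}wE; apply: le_trans (ler_normD _ _) _.
  rewrite lerD2r normrZ /c normrM normfV normrX normr_id -/r.
  rewrite le_eqVlt; apply/orP; left; apply/eqP.
  by field.
have [eta [e1 e2 e3]] : exists eta, [/\ `|eta| = 1, ip p eta = 0 & `|y| <= `|ip w eta|].
  case: (eqVneq y 0) => hy.
    have [eta [e1 e2]] := exists_orth Hip Hdim p p0.
    by exists eta; split => //; rewrite hy normr0.
  have [eta [e1 e2 e3]] := unit_orth Hip p y hy (perp_orth Hip p w p0).
  exists eta; split => //.
  by rewrite {1}wE ipDl // ipZl // e2 mulr0 add0r e3.
exists eta; split => //.
move=> s xi.
have hs : 0 <= s.
  rewrite /s sqrtC_ge0 subr_ge0 exprn_ile1 // ltW //.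
rewrite /xi ipDr // ipZr //.
rewrite (addrC (ip w p)); apply: le_trans (lerB_normD _ _).
rewrite normrM norm_conjC (ger0_norm hs).
have h1 : s * `|w| <= s * (`|ip w p| / r + `|ip w eta|).
  apply: (ler_wpM2l hs); apply: le_trans hA _; by rewrite lerD2l.
have -> : s * `|ip w eta| - `|ip w p| =
  s * (`|ip w p| / r + `|ip w eta|) - (1 + s / r) * `|ip w p| by field.
by rewrite lerD2r.
Qed.
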